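(* Let $u$ be the solution of the Cauchy problem in the context. Then for every $t>0$ and all $x\in[0,1]$, \[ 0\le\partial_xu(x,t)\le e^{(\sigma-m_0f_0-m_1f_1)t}. \]
   Context: Constants: $f_0>0$, $f_1\ge0$ with selection rate $\sigma=f_0-f_1>0$; $\lambda_0,\lambda_1\ge0$; $\gamma_0,\gamma_1\in(0,1]$; $m_0=\lambda_0\gamma_0$, $m_1=\lambda_1\gamma_1$. With $\mathcal{J}_0u(x,t)=u(x+\gamma_0(1-x),t)-u(x,t)$ and $\mathcal{J}_1u(x,t)=u(x-\gamma_1x,t)-u(x,t)$, $u$ is the unique (mild) solution, which is $C^\infty$ on $[0,1]\times[0,\infty)$, of \[ \partial_tu+\sigma(1-x)x\,\partial_xu=\lambda_0f_0\mathcal{J}_0u+\lambda_1f_1\mathcal{J}_1u\ (0\le x\le1,\ t>0),\quad u(x,0)=x. \] *)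

(* Defs.v *)
From Stdlib Require Import Reals.
From Coquelicot Require Import Coquelicot.
Open Scope R_scope.

Definition dom (x t : R) : Prop := 0 <= x <= 1 /\ 0 <= t.

Definition is_pderiv_x (u ux : R -> R -> R) : Prop :=
  forall x t, dom x t ->
    filterlim (fun h => (u (x + h) t - u x t) / h)
      (within (fun h => h <> 0 /\ 0 <= x + h <= 1) (locally 0))
      (locally (ux x t)).

Definition is_pderiv_t (u ut : R -> R -> R) : Prop :=
  forall x t, dom x t ->
    filterlim (fun h => (u x (t + h) - u x t) / h)
      (within (fun h => h <> 0 /\ 0 <= t + h) (locally 0))
      (locally (ut x t)).

Definition cont_on_dom (v : R -> R -> R) : Prop :=
  forall x t, dom x t ->
    filterlim (fun p : R * R => v (fst p) (snd p))
      (within (fun p : R * R => dom (fst p) (snd p)) (locally (x, t)))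
      (locally (v x t)).

Definition C1_on_dom (u ux ut : R -> R -> R) : Prop :=
  is_pderiv_x u ux /\ is_pderiv_t u ut /\ cont_on_dom ux /\ cont_on_dom ut.

Definition J0 (g0 : R) (u : R -> R -> R) (x t : R) : R :=
  u (x + g0 * (1 - x)) t - u x t.
Definition J1 (g1 : R) (u : R -> R -> R) (x t : R) : R :=
  u (x - g1 * x) t - u x t.

Definition is_solution (f0 f1 l0 l1 g0 g1 : R) (u ux ut : R -> R -> R) : Prop :=
  C1_on_dom u ux ut /\
  (forall x t, 0 <= x <= 1 -> 0 < t ->
     ut x t + (f0 - f1) * (1 - x) * x * ux x t
     = l0 * f0 * J0 g0 u x t + l1 * f1 * J1 g1 u x t) /\
  (forall x, 0 <= x <= 1 -> u x 0 = x).

(* Main.v *)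
Require Import Defs.
From Stdlib Require Import Reals Lra Classical.
From Coquelicot Require Import Coquelicot.
From mathcomp Require all_boot all_order all_algebra all_classical all_reals all_analysis Rstruct Rstruct_topology.

Module MC.
Import all_boot all_order all_algebra all_classical all_reals all_analysis Rstruct Rstruct_topology.
Import Order.TTheory GRing.Theory Num.Theory.
Local Open Scope classical_set_scope.

Lemma nbhsR (x d : R) : Rlt 0 d -> nbhs x (fun z : R => Rlt (Rabs (z - x)) d).
Proof.
move=> d0; apply/nbhs_ballP; exists d; first by apply/RltP.
move=> z /=; rewrite /ball /= -RabsE => /RltP; rewrite Rabs_minus_sym //.
Qed.

Lemma nbhsR3 (p : (R * R) * R) d : Rlt 0 d ->
  nbhs p (fun q : (R * R) * R => Rlt (Rabs (q.1.1 - p.1.1)) d /\ Rlt (Rabs (q.1.2 - p.1.2)) d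
                                 /\ Rlt (Rabs (q.2 - p.2)) d).
Proof.
move: p => [[x y] t] d0.
exists ((fun q : R * R => Rlt (Rabs (q.1 - x)) d /\ Rlt (Rabs (q.2 - y)) d),
        (fun s : R => Rlt (Rabs (s - t)) d)).
  split => /=; last exact: nbhsR.
  exists ((fun z : R => Rlt (Rabs (z - x)) d), (fun z : R => Rlt (Rabs (z - y)) d)).
    by split; apply: nbhsR.
  by move=> [a b] /= [].
by move=> [[a b] c] /= [[h1 h2] h3].
Qed.

Lemma min_point_abs (A : (R * R) * R -> Prop) (T : R) :
  (forall p, (forall e, Rlt 0 e -> exists q, A q /\ Rlt (Rabs (q.1.1 - p.1.1)) e /\
        Rlt (Rabs (q.1.2 - p.1.2)) e /\ Rlt (Rabs (q.2 - p.2)) e) -> A p) ->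
  (forall p, A p -> (Rle 0 p.1.1 /\ Rle p.1.1 1) /\ (Rle 0 p.1.2 /\ Rle p.1.2 1) /\ (Rle 0 p.2 /\ Rle p.2 T)) ->
  (exists p, A p) ->
  exists c, A c /\ forall q, A q -> Rle c.2 q.2.
Proof.
move=> Hcl HB [p0 Ap0].
pose B := (`[(0:R)%R, (1:R)%R]%classic `*` `[(0:R)%R, (1:R)%R]%classic) `*` `[(0:R)%R, T]%classic.
have cB : compact B.
  apply: compact_setX; last exact: segment_compact.
  by apply: compact_setX; exact: segment_compact.
have clA : closed (A : set _).
  move=> p Hp; apply: Hcl => e e0.
  have [q [Aq Nq]] := Hp _ (nbhsR3 p e e0).
  by exists q.
have AB : (A : set _) `<=` B.
  move=> p /HB [[h1 h2] [[h3 h4] [h5 h6]]].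
  by rewrite /B /= !in_itv /=; split; [split|]; apply/andP; split; apply/RleP.
have cA : compact (A : set _) by apply: (subclosed_compact clA cB AB).
have A0 : (A : set _) !=set0 by exists p0.
have cf : {within (A : set _), continuous (fun p : (R * R) * R => p.2)}.
  apply: continuous_subspaceT => p; exact: cvg_snd.
have [c cin cmin] := compact_EVT_min A0 cA cf.
exists c; split; first by move: cin; rewrite inE.
by move=> q Aq; apply/RleP; apply: cmin; rewrite inE.
Qed.
End MC.
Open Scope R_scope.
Lemma fl_ed (f : R -> R) (P : R -> Prop) L :
  filterlim f (within P (locally 0)) (locally L) ->
  forall e, 0 < e -> exists d, 0 < d /\ forall h, P h -> Rabs h < d -> Rabs (f h - L) < e.
Proof.
  intros H e He.
  assert (Hl : locally L (fun z => Rabs (z - L) < e)).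
  { exists (mkposreal e He). intros z Hz. exact Hz. }
  specialize (H _ Hl). destruct H as [d Hd].
  exists d. split. apply cond_pos.
  intros h Ph Hh. apply (Hd h). unfold ball; simpl; unfold AbsRing_ball, minus, plus, opp; simpl.
  replace (h + - 0) with h by ring. exact Hh. exact Ph.
Qed.

Lemma fl_ed2 (f : R * R -> R) (P : R * R -> Prop) x t L :
  filterlim f (within P (locally (x, t))) (locally L) ->
  forall e, 0 < e -> exists d, 0 < d /\ forall x' t', P (x', t') -> Rabs (x' - x) < d -> Rabs (t' - t) < d -> Rabs (f (x', t') - L) < e.
Proof.
  intros H e He.
  assert (Hl : locally L (fun z => Rabs (z - L) < e)).
  { exists (mkposreal e He). intros z Hz. exact Hz. }
  specialize (H _ Hl). destruct H as [d Hd].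
  exists d. split. apply cond_pos.
  intros x' t' Ph Hx Ht. apply (Hd (x', t')). split; simpl; exact (fun _ => _) || idtac.
  - exact Hx.
  - exact Ht.
  - exact Ph.
Qed.

Definition cl (z : R) := Rmax 0 (Rmin z 1).

Lemma cl_id z : 0 <= z <= 1 -> cl z = z.
Proof. intros. unfold cl. rewrite Rmin_left by lra. rewrite Rmax_right by lra. reflexivity. Qed.

Lemma cl_in z : 0 <= cl z <= 1.
Proof. unfold cl. unfold Rmax, Rmin. repeat destruct Rle_dec; lra. Qed.

Lemma cl_lip z w : Rabs (cl z - cl w) <= Rabs (z - w).
Proof. unfold cl, Rmax, Rmin. repeat destruct Rle_dec; unfold Rabs; repeat destruct Rcase_abs; lra. Qed.

Definition Reg (T x y t : R) := (0 <= x /\ x <= y /\ y <= 1) /\ (0 <= t /\ t <= T).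

Lemma first_point (G : R -> R -> R -> R) (T : R) :
  (forall x y t, Reg T x y t -> forall e, 0 < e -> exists d, 0 < d /\ forall x' y' t', Reg T x' y' t' ->
     Rabs (x' - x) < d -> Rabs (y' - y) < d -> Rabs (t' - t) < d -> Rabs (G x' y' t' - G x y t) < e) ->
  (exists x y t, Reg T x y t /\ 0 <= G x y t) ->
  exists x y t, (Reg T x y t /\ 0 <= G x y t) /\ forall x' y' t', Reg T x' y' t' -> 0 <= G x' y' t' -> t <= t'.
Proof.
  intros Hc [x0 [y0 [t0 H0]]].
  set (A := fun p : (R * R) * R => Reg T (fst (fst p)) (snd (fst p)) (snd p) /\ 0 <= G (fst (fst p)) (snd (fst p)) (snd p)).
  destruct (MC.min_point_abs A T) as [[[a b] c] [Ac Hmin]].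
  - intros [[x y] t] Hp. simpl in Hp.
    assert (HR : Reg T x y t).
    { unfold Reg. destruct (Rle_dec 0 x); [|destruct (Hp (-x)) as [[[qx qy] qt] [[[? ?] ?] [h1 [h2 h3]]]]; [lra|]; simpl in *; apply Rabs_def2 in h1; lra].
      destruct (Rle_dec x y); [|destruct (Hp ((x-y)/2)) as [[[qx qy] qt] [[[? ?] ?] [h1 [h2 h3]]]]; [lra|]; simpl in *; apply Rabs_def2 in h1; apply Rabs_def2 in h2; lra].
      destruct (Rle_dec y 1); [|destruct (Hp (y-1)) as [[[qx qy] qt] [[[? ?] ?] [h1 [h2 h3]]]]; [lra|]; simpl in *; apply Rabs_def2 in h2; lra].
      destruct (Rle_dec 0 t); [|destruct (Hp (-t)) as [[[qx qy] qt] [[[? ?] ?] [h1 [h2 h3]]]]; [lra|]; simpl in *; apply Rabs_def2 in h3; lra].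
      destruct (Rle_dec t T); [|destruct (Hp (t-T)) as [[[qx qy] qt] [[[? ?] ?] [h1 [h2 h3]]]]; [lra|]; simpl in *; apply Rabs_def2 in h3; lra].
      tauto. }
    split. exact HR. simpl.
    destruct (Rle_dec 0 (G x y t)) as [?|Hn]; [assumption|].
    destruct (Hc x y t HR (- G x y t)) as [d [Hd Hd2]]; [lra|].
    destruct (Hp d Hd) as [[[qx qy] qt] [[Hq1 Hq2] [h1 [h2 h3]]]]. simpl in *.
    specialize (Hd2 qx qy qt Hq1 h1 h2 h3). apply Rabs_def2 in Hd2. lra.
  - intros [[x y] t] [HR _]. unfold Reg in HR. simpl in *. repeat split; lra.
  - exists ((x0, y0), t0). exact H0.
  - exists a, b, c. split. exact Ac.
    intros x' y' t' HR HG. apply (Hmin ((x', y'), t')). split; assumption.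
Qed.

Section Main.
Variables f0 f1 l0 l1 g0 g1 : R.
Variables u ux ut : R -> R -> R.
Hypothesis Hsol : is_solution f0 f1 l0 l1 g0 g1 u ux ut.

Lemma EDx x t : dom x t -> forall e, 0 < e -> exists d, 0 < d /\ forall h, h <> 0 -> 0 <= x + h <= 1 -> Rabs h < d ->
  Rabs ((u (x + h) t - u x t) / h - ux x t) < e.
Proof.
  intros D e He. destruct Hsol as [[Hx _] _].
  destruct (fl_ed _ _ _ (Hx x t D) e He) as [d [Hd H]]. exists d. split. exact Hd.
  intros h h1 h2 h3. apply H. split; assumption. exact h3.
Qed.

Lemma EDt x t : dom x t -> forall e, 0 < e -> exists d, 0 < d /\ forall h, h <> 0 -> 0 <= t + h -> Rabs h < d ->
  Rabs ((u x (t + h) - u x t) / h - ut x t) < e.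
Proof.
  intros D e He. destruct Hsol as [[_ [Ht _]] _].
  destruct (fl_ed _ _ _ (Ht x t D) e He) as [d [Hd H]]. exists d. split. exact Hd.
  intros h h1 h2 h3. apply H. split; assumption. exact h3.
Qed.

Lemma EDc (v : R -> R -> R) : cont_on_dom v -> forall x t, dom x t -> forall e, 0 < e -> exists d, 0 < d /\
  forall x' t', dom x' t' -> Rabs (x' - x) < d -> Rabs (t' - t) < d -> Rabs (v x' t' - v x t) < e.
Proof.
  intros Hc x t D e He.
  destruct (fl_ed2 _ _ _ _ _ (Hc x t D) e He) as [d [Hd H]]. exists d. split. exact Hd.
  intros x' t' D' h1 h2. apply (H x' t'); assumption.
Qed.

Lemma quot_bound a b h l : h <> 0 -> Rabs ((b - a) / h - l) < 1 -> Rabs (b - a) <= Rabs h * (Rabs l + 1).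
Proof.
  intros Hh H.
  assert (E : b - a = h * ((b - a) / h)) by (field; exact Hh).
  rewrite E, Rabs_mult. apply Rmult_le_compat_l. apply Rabs_pos.
  assert (Rabs ((b - a)/h) <= Rabs l + Rabs ((b-a)/h - l)).
  { replace ((b-a)/h) with (l + ((b-a)/h - l)) at 1 by ring. apply Rabs_triang. }
  lra.
Qed.

Lemma ucx x t : dom x t -> forall e, 0 < e -> exists d, 0 < d /\ forall x', 0 <= x' <= 1 -> Rabs (x' - x) < d ->
  Rabs (u x' t - u x t) < e.
Proof.
  intros D e He. destruct (EDx x t D 1 Rlt_0_1) as [d1 [Hd1 H1]].
  set (M := Rabs (ux x t) + 1).
  assert (HM : 0 < M) by (unfold M; pose proof (Rabs_pos (ux x t)); lra).
  exists (Rmin d1 (e / M)). split. apply Rmin_pos; [lra | apply Rdiv_lt_0_compat; lra].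
  intros x' Hx' Hd. destruct (Req_dec x' x) as [E|E].
  { subst. replace (u x t - u x t) with 0 by ring. rewrite Rabs_R0. lra. }
  pose (h := x' - x).
  assert (Hh : h <> 0) by (unfold h; lra).
  assert (Hq := H1 h Hh). replace (x + h) with x' in Hq by (unfold h; ring).
  assert (Hh2 : Rabs h < d1) by (unfold h; pose proof (Rmin_l d1 (e/M)); lra).
  specialize (Hq Hx' Hh2).
  pose proof (quot_bound _ _ _ _ Hh Hq) as Hb. fold M in Hb.
  assert (Rabs h < e / M) by (unfold h; pose proof (Rmin_r d1 (e/M)); lra).
  assert (Rabs h * M < e).
  { apply (Rmult_lt_compat_r M) in H; [|lra]. unfold Rdiv in H. rewrite Rmult_assoc, Rinv_l in H by lra. lra. }
  lra.
Qed.

Lemma uct x t : dom x t -> forall e, 0 < e -> exists d, 0 < d /\ forall t', 0 <= t' -> Rabs (t' - t) < d ->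
  Rabs (u x t' - u x t) < e.
Proof.
  intros D e He. destruct (EDt x t D 1 Rlt_0_1) as [d1 [Hd1 H1]].
  set (M := Rabs (ut x t) + 1).
  assert (HM : 0 < M) by (unfold M; pose proof (Rabs_pos (ut x t)); lra).
  exists (Rmin d1 (e / M)). split. apply Rmin_pos; [lra | apply Rdiv_lt_0_compat; lra].
  intros x' Hx' Hd. destruct (Req_dec x' t) as [E|E].
  { subst. replace (u x t - u x t) with 0 by ring. rewrite Rabs_R0. lra. }
  pose (h := x' - t).
  assert (Hh : h <> 0) by (unfold h; lra).
  assert (Hq := H1 h Hh). replace (t + h) with x' in Hq by (unfold h; ring).
  assert (Hh2 : Rabs h < d1) by (unfold h; pose proof (Rmin_l d1 (e/M)); lra).
  specialize (Hq Hx' Hh2).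
  pose proof (quot_bound _ _ _ _ Hh Hq) as Hb. fold M in Hb.
  assert (Rabs h < e / M) by (unfold h; pose proof (Rmin_r d1 (e/M)); lra).
  assert (Rabs h * M < e).
  { apply (Rmult_lt_compat_r M) in H; [|lra]. unfold Rdiv in H. rewrite Rmult_assoc, Rinv_l in H by lra. lra. }
  lra.
Qed.

Lemma umvt a b tau : 0 <= a <= 1 -> 0 <= b <= 1 -> 0 <= tau ->
  exists c, Rmin a b <= c <= Rmax a b /\ u b tau - u a tau = ux c tau * (b - a).
Proof.
  intros Ha Hb Htau.
  set (phi := fun z => u (cl z) tau).
  assert (Hmin : 0 <= Rmin a b) by (apply Rmin_glb; lra).
  assert (Hmax : Rmax a b <= 1) by (apply Rmax_lub; lra).
  destruct (MVT_gen phi a b (fun z => ux z tau)) as [c [Hc E]].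
  - intros z Hz. simpl in Hz. apply is_derive_Reals. intros eps Heps.
    assert (Dz : dom z tau) by (split; [lra|lra]).
    destruct (EDx z tau Dz eps Heps) as [d [Hd H]].
    assert (Hpos : 0 < Rmin d (Rmin z (1 - z))) by (repeat apply Rmin_pos; lra).
    exists (mkposreal _ Hpos). intros h Hh Hh2. simpl in Hh2.
    pose proof (Rmin_l d (Rmin z (1-z))). pose proof (Rmin_r d (Rmin z (1-z))).
    pose proof (Rmin_l z (1-z)). pose proof (Rmin_r z (1-z)).
    assert (Hr : 0 <= z + h <= 1) by (apply Rabs_def2 in Hh2; lra).
    unfold phi. rewrite (cl_id z), (cl_id (z + h)) by lra.
    apply H; [exact Hh | exact Hr | lra].
  - intros z Hz. simpl in Hz. intros eps Heps.
    assert (Dz : dom z tau) by (split; [lra|lra]).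
    destruct (ucx z tau Dz eps Heps) as [d [Hd H]].
    exists d. split. lra. intros z' [_ Hz']. simpl in Hz'. unfold R_dist in Hz'. simpl. unfold R_dist.
    unfold phi. rewrite (cl_id z) by lra. apply H. apply cl_in.
    pose proof (cl_lip z' z). rewrite (cl_id z) in H0 by lra. lra.
  - exists c. split. exact Hc. unfold phi in E. rewrite (cl_id a), (cl_id b) in E by lra. exact E.
Qed.

Lemma ucont x t : dom x t -> forall e, 0 < e -> exists d, 0 < d /\ forall x' t', dom x' t' ->
  Rabs (x' - x) < d -> Rabs (t' - t) < d -> Rabs (u x' t' - u x t) < e.
Proof.
  intros D e He.
  destruct Hsol as [[_ [_ [Hcux _]]] _].
  destruct (EDc ux Hcux x t D 1 Rlt_0_1) as [d1 [Hd1 H1]].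
  set (M := Rabs (ux x t) + 1).
  assert (HM : 0 < M) by (unfold M; pose proof (Rabs_pos (ux x t)); lra).
  assert (He2 : 0 < e / 2) by lra.
  destruct (uct x t D (e/2) He2) as [d2 [Hd2 H2]].
  exists (Rmin (Rmin d1 d2) (e / 2 / M)). split.
  { repeat apply Rmin_pos; try lra. apply Rdiv_lt_0_compat; lra. }
  intros x' t' D' Hx Ht.
  pose proof (Rmin_l (Rmin d1 d2) (e/2/M)). pose proof (Rmin_r (Rmin d1 d2) (e/2/M)).
  pose proof (Rmin_l d1 d2). pose proof (Rmin_r d1 d2).
  destruct D as [Dx Dt]. destruct D' as [Dx' Dt'].
  destruct (umvt x x' t' Dx Dx' Dt') as [c [Hc E]].
  assert (Hcx : Rabs (c - x) < d1).
  { assert (Rabs (c - x) <= Rabs (x' - x)).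
    { unfold Rmin, Rmax in Hc. destruct Rle_dec; unfold Rabs; repeat destruct Rcase_abs; lra. }
    lra. }
  assert (Hcb : Rabs (ux c t' - ux x t) < 1).
  { apply H1. split. unfold Rmin, Rmax in Hc. destruct Rle_dec; lra. lra. exact Hcx. lra. }
  assert (Hb : Rabs (ux c t') <= M).
  { unfold M. replace (ux c t') with (ux x t + (ux c t' - ux x t)) by ring.
    pose proof (Rabs_triang (ux x t) (ux c t' - ux x t)). lra. }
  assert (P1 : Rabs (u x' t' - u x t') < e / 2).
  { rewrite E, Rabs_mult.
    assert (Rabs (x' - x) < e / 2 / M) by lra.
    assert (Rabs (x' - x) * M < e / 2).
    { apply (Rmult_lt_compat_r M) in H5; [|lra]. unfold Rdiv in H5. rewrite Rmult_assoc, Rinv_l in H5 by lra. lra. }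
    assert (Rabs (ux c t') * Rabs (x' - x) <= M * Rabs (x' - x)).
    { apply Rmult_le_compat_r. apply Rabs_pos. exact Hb. }
    lra. }
  assert (P2 : Rabs (u x t' - u x t) < e / 2) by (apply H2; lra).
  replace (u x' t' - u x t) with ((u x' t' - u x t') + (u x t' - u x t)) by ring.
  pose proof (Rabs_triang (u x' t' - u x t') (u x t' - u x t)). lra.
Qed.
End Main.
Lemma cont_ed (f : R -> R) x : continuity_pt f x ->
  forall e, 0 < e -> exists d, 0 < d /\ forall x', Rabs (x' - x) < d -> Rabs (f x' - f x) < e.
Proof.
  intros H e He. destruct (H e He) as [d [Hd H2]]. exists d. split. lra.
  intros x' Hx'. destruct (Req_dec x' x) as [E|E].
  - subst. replace (f x - f x) with 0 by ring. rewrite Rabs_R0. lra.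
  - apply (H2 x'). split. split. exact I. auto. exact Hx'.
Qed.

Lemma cont_expc c t : continuity_pt (fun t => exp (c * t)) t.
Proof.
  apply derivable_continuous_pt. apply (derivable_pt_comp (fun t => c * t) exp).
  apply derivable_pt_scal. apply derivable_pt_id. apply derivable_pt_exp.
Qed.

Lemma abs_small_prod a b M e : Rabs a <= M -> 0 <= M -> Rabs b < e / (M + 1) -> 0 < e -> Rabs (a * b) < e.
Proof.
  intros Ha HM Hb He. rewrite Rabs_mult.
  assert (Rabs b * (M + 1) < e).
  { apply (Rmult_lt_compat_r (M+1)) in Hb; [|lra]. unfold Rdiv in Hb. rewrite Rmult_assoc, Rinv_l in Hb by lra. lra. }
  assert (Rabs a * Rabs b <= M * Rabs b) by (apply Rmult_le_compat_r; [apply Rabs_pos|exact Ha]).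
  pose proof (Rabs_pos b). nra.
Qed.

Lemma abs6 a b c d e f E : Rabs a < E -> Rabs b < E -> Rabs c < E -> Rabs d < E -> Rabs e < E -> Rabs f < E ->
  Rabs (a + b + c + d + e + f) < 6 * E.
Proof.
  intros. pose proof (Rabs_triang (a+b+c+d+e) f). pose proof (Rabs_triang (a+b+c+d) e).
  pose proof (Rabs_triang (a+b+c) d). pose proof (Rabs_triang (a+b) c). pose proof (Rabs_triang a b). lra.
Qed.

Definition Phi (u : R -> R -> R) c s a eps x y t :=
  s * (u y t - u x t) - a * exp (c * t) * (y - x) - eps * exp t.

Section M2.
Variables f0 f1 l0 l1 g0 g1 : R.
Variables u ux ut : R -> R -> R.
Hypothesis Hsol : is_solution f0 f1 l0 l1 g0 g1 u ux ut.

Lemma Phi_cont c s a eps T : (s = 1 \/ s = -1) -> 0 <= a -> 0 < eps ->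
  forall x y t, Reg T x y t -> forall e, 0 < e -> exists d, 0 < d /\ forall x' y' t', Reg T x' y' t' ->
     Rabs (x' - x) < d -> Rabs (y' - y) < d -> Rabs (t' - t) < d ->
     Rabs (Phi u c s a eps x' y' t' - Phi u c s a eps x y t) < e.
Proof.
  intros Hs Ha Heps x y t HR e He.
  set (e6 := e / 6). assert (He6 : 0 < e6) by (unfold e6; lra).
  unfold Reg in HR.
  assert (Dy : dom y t) by (split; lra). assert (Dx : dom x t) by (split; lra).
  destruct (ucont _ _ _ _ _ _ _ _ _ Hsol y t Dy e6 He6) as [dy [Hdy Hy]].
  destruct (ucont _ _ _ _ _ _ _ _ _ Hsol x t Dx e6 He6) as [dx [Hdx Hx]].
  assert (H1p : 0 < e6 / (a + 1)) by (apply Rdiv_lt_0_compat; lra).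
  destruct (cont_ed _ t (cont_expc c t) _ H1p) as [d1 [Hd1 H1]].
  assert (H2p : 0 < e6 / (eps + 1)) by (apply Rdiv_lt_0_compat; lra).
  assert (Hce : continuity_pt exp t) by (apply derivable_continuous_pt; apply derivable_pt_exp).
  destruct (cont_ed _ t Hce _ H2p) as [d2 [Hd2 H2]].
  set (AE := a * exp (c * t)).
  assert (HAE : 0 <= AE) by (unfold AE; pose proof (exp_pos (c*t)); nra).
  assert (H3p : 0 < e6 / (AE + 1)) by (apply Rdiv_lt_0_compat; lra).
  set (d := Rmin (Rmin (Rmin dy dx) (Rmin d1 d2)) (e6 / (AE + 1))).
  assert (Hd : 0 < d) by (unfold d; repeat apply Rmin_pos; lra).
  exists d. split. exact Hd.
  intros x' y' t' HR' hx hy ht.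
  assert (d <= dy /\ d <= dx /\ d <= d1 /\ d <= d2 /\ d <= e6 / (AE + 1)).
  { unfold d. pose proof (Rmin_l (Rmin (Rmin dy dx) (Rmin d1 d2)) (e6 / (AE + 1))).
    pose proof (Rmin_r (Rmin (Rmin dy dx) (Rmin d1 d2)) (e6 / (AE + 1))).
    pose proof (Rmin_l (Rmin dy dx) (Rmin d1 d2)). pose proof (Rmin_r (Rmin dy dx) (Rmin d1 d2)).
    pose proof (Rmin_l dy dx). pose proof (Rmin_r dy dx). pose proof (Rmin_l d1 d2). pose proof (Rmin_r d1 d2). lra. }
  unfold Reg in HR'.
  assert (Dy' : dom y' t') by (split; lra). assert (Dx' : dom x' t') by (split; lra).
  assert (Has : Rabs s = 1) by (destruct Hs as [-> | ->]; unfold Rabs; destruct Rcase_abs; lra).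
  assert (T1 : Rabs (s * (u y' t' - u y t)) < e6).
  { rewrite Rabs_mult, Has, Rmult_1_l; apply Hy; (exact Dy' || lra). }
  assert (T2 : Rabs (- (s * (u x' t' - u x t))) < e6).
  { rewrite Rabs_Ropp, Rabs_mult, Has, Rmult_1_l; apply Hx; (exact Dx' || lra). }
  assert (T3 : Rabs (- (a * (y' - x')) * (exp (c * t') - exp (c * t))) < e6).
  { apply (abs_small_prod _ _ a); try lra.
    rewrite Rabs_Ropp, Rabs_mult, (Rabs_right a) by lra.
    assert (Rabs (y' - x') <= 1) by (rewrite Rabs_right; lra). nra.
    apply H1. lra. }
  assert (T4 : Rabs (- AE * (y' - y)) < e6).
  { apply (abs_small_prod _ _ AE); try lra. rewrite Rabs_Ropp, Rabs_right; lra. }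
  assert (T5 : Rabs (AE * (x' - x)) < e6).
  { apply (abs_small_prod _ _ AE); try lra. rewrite Rabs_right; lra. }
  assert (T6 : Rabs (- eps * (exp t' - exp t)) < e6).
  { apply (abs_small_prod _ _ eps); try lra. rewrite Rabs_Ropp, Rabs_right; lra. apply H2; lra. }
  pose proof (abs6 _ _ _ _ _ _ _ T1 T2 T3 T4 T5 T6) as Hs6.
  replace (Phi u c s a eps x' y' t' - Phi u c s a eps x y t) with
    (s * (u y' t' - u y t) + - (s * (u x' t' - u x t)) + - (a * (y' - x')) * (exp (c * t') - exp (c * t))
     + - AE * (y' - y) + AE * (x' - x) + - eps * (exp t' - exp t)).
  unfold e6 in Hs6. lra.
  unfold Phi, AE. ring.
Qed.

Hypothesis Hf0 : 0 < f0.
Hypothesis Hf1 : 0 <= f1.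
Hypothesis Hsig : 0 < f0 - f1.
Hypothesis Hl0 : 0 <= l0.
Hypothesis Hl1 : 0 <= l1.
Hypothesis Hg0 : 0 < g0 <= 1.
Hypothesis Hg1 : 0 < g1 <= 1.

Definition cc := (f0 - f1) - (l0 * g0) * f0 - (l1 * g1) * f1.

Lemma Rabs_s s : (s = 1 \/ s = -1) -> Rabs s = 1.
Proof. intros Hs; destruct Hs as [-> | ->]; unfold Rabs; destruct Rcase_abs; lra. Qed.

Lemma exp_quot c t : forall e, 0 < e -> exists d, 0 < d /\ forall h, h <> 0 -> Rabs h < d ->
  Rabs ((exp (c * (t + h)) - exp (c * t)) / h - c * exp (c * t)) < e.
Proof.
  intros e He.
  assert (D : is_derive (fun t => exp (c * t)) t (c * exp (c * t))) by (auto_derive; [exact I | ring]).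
  apply is_derive_Reals in D. destruct (D e He) as [d Hd]. exists d. split. apply cond_pos.
  intros h Hh Hh2. apply (Hd h Hh Hh2).
Qed.

Lemma maxp s a eps T : (s = 1 \/ s = -1) -> 0 <= a -> s <= a -> 0 < eps ->
  forall x y t, Reg T x y t -> Phi u cc s a eps x y t < 0.
Proof.
  intros Hs Ha Hsa Heps x y t HR.
  apply Rnot_le_lt; intro Hge.
  assert (Has := Rabs_s s Hs).
  destruct Hsol as [_ [Hpde Hinit]].
  destruct (first_point (Phi u cc s a eps) T (Phi_cont cc s a eps T Hs Ha Heps)) as [x0 [y0 [t0 [[HR0 HG0] Hmin]]]].
  { exists x, y, t. split; assumption. }
  assert (F0 : forall x' y' t', Reg T x' y' t' -> t' < t0 -> Phi u cc s a eps x' y' t' < 0).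
  { intros x' y' t' HR' Ht'. apply Rnot_le_lt. intro Hc. specialize (Hmin x' y' t' HR' Hc). lra. }
  pose proof HR0 as [[Hx0 [Hxy0 Hy0]] [Ht0 HtT]].
  set (A := a * exp (cc * t0)). set (E := eps * exp t0).
  assert (HA : 0 <= A) by (unfold A; pose proof (exp_pos (cc * t0)); nra).
  assert (HE : 0 < E) by (unfold E; pose proof (exp_pos t0); nra).
  assert (Ht0p : 0 < t0).
  { destruct (Rle_lt_or_eq_dec 0 t0 Ht0) as [?|E0]; [assumption|]. subst t0.
    exfalso. unfold Phi in HG0. rewrite !Hinit in HG0 by lra. rewrite Rmult_0_r, exp_0 in HG0. nra. }
  assert (Fle : forall x' y', 0 <= x' -> x' <= y' -> y' <= 1 -> Phi u cc s a eps x' y' t0 <= 0).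
  { intros x' y' h1 h2 h3. apply Rnot_lt_le. intro Hp.
    assert (HR' : Reg T x' y' t0) by (unfold Reg; lra).
    destruct (Phi_cont cc s a eps T Hs Ha Heps x' y' t0 HR' _ Hp) as [d [Hd Hd2]].
    set (t' := t0 - Rmin d t0 / 2).
    assert (Hm : 0 < Rmin d t0) by (apply Rmin_pos; lra).
    pose proof (Rmin_l d t0). pose proof (Rmin_r d t0).
    assert (HR'' : Reg T x' y' t') by (unfold Reg, t'; lra).
    assert (Hlt : Phi u cc s a eps x' y' t' < 0) by (apply F0; [exact HR''| unfold t'; lra]).
    assert (Habs : Rabs (Phi u cc s a eps x' y' t' - Phi u cc s a eps x' y' t0) < Phi u cc s a eps x' y' t0).
    { apply Hd2. exact HR''. rewrite Rminus_eq_0, Rabs_R0; lra. rewrite Rminus_eq_0, Rabs_R0; lra.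
      unfold t'. replace (t0 - Rmin d t0 / 2 - t0) with (- (Rmin d t0 / 2)) by ring.
      rewrite Rabs_Ropp, Rabs_right; lra. }
    apply Rabs_def2 in Habs. lra. }
  assert (HP0 : Phi u cc s a eps x0 y0 t0 = 0) by (pose proof (Fle x0 y0 Hx0 Hxy0 Hy0); lra).
  assert (HP0' : s * (u y0 t0 - u x0 t0) = A * (y0 - x0) + E) by (unfold Phi in HP0; unfold A, E; lra).
  assert (Hxy : x0 < y0).
  { destruct (Rle_lt_or_eq_dec x0 y0 Hxy0) as [?|E0]; [assumption|]. subst y0. exfalso.
    unfold Phi in HP0. replace (u x0 t0 - u x0 t0) with 0 in HP0 by ring. nra. }
  (* first-order condition in x *)
  assert (FOx : (1 - x0) * x0 * (s * ux x0 t0) = (1 - x0) * x0 * A).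
  { destruct (Rle_lt_or_eq_dec 0 x0 Hx0) as [Hxp|E0]; [|subst x0; ring].
    assert (Dx : dom x0 t0) by (split; lra).
    assert (Hdiff : forall h, h <> 0 -> 0 <= x0 + h -> x0 + h <= y0 ->
       - s * ((u (x0 + h) t0 - u x0 t0) / h) * h + A * h <= 0).
    { intros h Hh h1 h2. pose proof (Fle (x0 + h) y0 h1 h2 Hy0) as Hf.
      unfold Phi in Hf. unfold Phi in HP0. fold A E in Hf, HP0.
      replace (- s * ((u (x0 + h) t0 - u x0 t0) / h) * h) with (- s * (u (x0 + h) t0 - u x0 t0)) by (field; exact Hh).
      nra. }
    assert (Heq : s * ux x0 t0 = A).
    { destruct (Rtotal_order (s * ux x0 t0) A) as [Hlt|[Heq|Hgt]]; [exfalso| exact Heq | exfalso].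
      - destruct (EDx _ _ _ _ _ _ _ _ _ Hsol x0 t0 Dx (A - s * ux x0 t0)) as [d [Hd Hq]]; [lra|].
        set (h := Rmin d (y0 - x0) / 2).
        assert (Hm : 0 < Rmin d (y0 - x0)) by (apply Rmin_pos; lra).
        pose proof (Rmin_l d (y0 - x0)). pose proof (Rmin_r d (y0 - x0)).
        assert (Hh : 0 < h) by (unfold h; lra).
        specialize (Hq h ltac:(lra) ltac:(unfold h; lra) ltac:(rewrite Rabs_right; unfold h; lra)).
        specialize (Hdiff h ltac:(lra) ltac:(unfold h; lra) ltac:(unfold h; lra)).
        set (q := (u (x0 + h) t0 - u x0 t0) / h) in *.
        assert (Hsq : Rabs (s * q - s * ux x0 t0) < A - s * ux x0 t0).
        { rewrite <- Rmult_minus_distr_l, Rabs_mult, Has, Rmult_1_l. exact Hq. }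
        apply Rabs_def2 in Hsq. nra.
      - destruct (EDx _ _ _ _ _ _ _ _ _ Hsol x0 t0 Dx (s * ux x0 t0 - A)) as [d [Hd Hq]]; [lra|].
        set (h := - (Rmin d x0 / 2)).
        assert (Hm : 0 < Rmin d x0) by (apply Rmin_pos; lra).
        pose proof (Rmin_l d x0). pose proof (Rmin_r d x0).
        assert (Hh : h < 0) by (unfold h; lra).
        specialize (Hq h ltac:(lra) ltac:(unfold h; lra) ltac:(rewrite Rabs_left; unfold h; lra)).
        specialize (Hdiff h ltac:(lra) ltac:(unfold h; lra) ltac:(unfold h; lra)).
        set (q := (u (x0 + h) t0 - u x0 t0) / h) in *.
        assert (Hsq : Rabs (s * q - s * ux x0 t0) < s * ux x0 t0 - A).
        { rewrite <- Rmult_minus_distr_l, Rabs_mult, Has, Rmult_1_l. exact Hq. }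
        apply Rabs_def2 in Hsq. nra. }
    rewrite Heq. reflexivity. }
  (* first-order condition in y *)
  assert (FOy : (1 - y0) * y0 * (s * ux y0 t0) = (1 - y0) * y0 * A).
  { destruct (Rle_lt_or_eq_dec y0 1 Hy0) as [Hyp|E0]; [|subst y0; ring].
    assert (Dy : dom y0 t0) by (split; lra).
    assert (Hdiff : forall h, h <> 0 -> x0 <= y0 + h -> y0 + h <= 1 ->
       s * ((u (y0 + h) t0 - u y0 t0) / h) * h - A * h <= 0).
    { intros h Hh h1 h2. pose proof (Fle x0 (y0 + h) Hx0 h1 h2) as Hf.
      unfold Phi in Hf. unfold Phi in HP0. fold A E in Hf, HP0.
      replace (s * ((u (y0 + h) t0 - u y0 t0) / h) * h) with (s * (u (y0 + h) t0 - u y0 t0)) by (field; exact Hh).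
      nra. }
    assert (Heq : s * ux y0 t0 = A).
    { destruct (Rtotal_order (s * ux y0 t0) A) as [Hlt|[Heq|Hgt]]; [exfalso| exact Heq | exfalso].
      - destruct (EDx _ _ _ _ _ _ _ _ _ Hsol y0 t0 Dy (A - s * ux y0 t0)) as [d [Hd Hq]]; [lra|].
        set (h := - (Rmin d (y0 - x0) / 2)).
        assert (Hm : 0 < Rmin d (y0 - x0)) by (apply Rmin_pos; lra).
        pose proof (Rmin_l d (y0 - x0)). pose proof (Rmin_r d (y0 - x0)).
        assert (Hh : h < 0) by (unfold h; lra).
        specialize (Hq h ltac:(lra) ltac:(unfold h; lra) ltac:(rewrite Rabs_left; unfold h; lra)).
        specialize (Hdiff h ltac:(lra) ltac:(unfold h; lra) ltac:(unfold h; lra)).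
        set (q := (u (y0 + h) t0 - u y0 t0) / h) in *.
        assert (Hsq : Rabs (s * q - s * ux y0 t0) < A - s * ux y0 t0).
        { rewrite <- Rmult_minus_distr_l, Rabs_mult, Has, Rmult_1_l. exact Hq. }
        apply Rabs_def2 in Hsq. nra.
      - destruct (EDx _ _ _ _ _ _ _ _ _ Hsol y0 t0 Dy (s * ux y0 t0 - A)) as [d [Hd Hq]]; [lra|].
        set (h := Rmin d (1 - y0) / 2).
        assert (Hm : 0 < Rmin d (1 - y0)) by (apply Rmin_pos; lra).
        pose proof (Rmin_l d (1 - y0)). pose proof (Rmin_r d (1 - y0)).
        assert (Hh : 0 < h) by (unfold h; lra).
        specialize (Hq h ltac:(lra) ltac:(unfold h; lra) ltac:(rewrite Rabs_right; unfold h; lra)).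
        specialize (Hdiff h ltac:(lra) ltac:(unfold h; lra) ltac:(unfold h; lra)).
        set (q := (u (y0 + h) t0 - u y0 t0) / h) in *.
        assert (Hsq : Rabs (s * q - s * ux y0 t0) < s * ux y0 t0 - A).
        { rewrite <- Rmult_minus_distr_l, Rabs_mult, Has, Rmult_1_l. exact Hq. }
        apply Rabs_def2 in Hsq. nra. }
    rewrite Heq. reflexivity. }
  assert (HJ0 : s * (J0 g0 u y0 t0 - J0 g0 u x0 t0) <= - g0 * A * (y0 - x0)).
  { pose proof (Fle (x0 + g0 * (1 - x0)) (y0 + g0 * (1 - y0)) ltac:(nra) ltac:(nra) ltac:(nra)) as Hf.
    unfold Phi in Hf. fold A E in Hf. unfold J0. nra. }
  assert (HJ1 : s * (J1 g1 u y0 t0 - J1 g1 u x0 t0) <= - g1 * A * (y0 - x0)).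
  { pose proof (Fle (x0 - g1 * x0) (y0 - g1 * y0) ltac:(nra) ltac:(nra) ltac:(nra)) as Hf.
    unfold Phi in Hf. fold A E in Hf. unfold J1. nra. }
  assert (HPDE : s * (ut y0 t0 - ut x0 t0) <= cc * A * (y0 - x0)).
  { pose proof (Hpde y0 t0 ltac:(lra) Ht0p) as Py. pose proof (Hpde x0 t0 ltac:(lra) Ht0p) as Px.
    assert (Eq : s * (ut y0 t0 - ut x0 t0) =
      l0 * f0 * (s * (J0 g0 u y0 t0 - J0 g0 u x0 t0)) + l1 * f1 * (s * (J1 g1 u y0 t0 - J1 g1 u x0 t0))
      - (f0 - f1) * ((1 - y0) * y0 * (s * ux y0 t0) - (1 - x0) * x0 * (s * ux x0 t0))).
    { nra. }
    rewrite FOx, FOy in Eq. rewrite Eq.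
    assert (I0 : l0 * f0 * (s * (J0 g0 u y0 t0 - J0 g0 u x0 t0)) <= l0 * f0 * (- g0 * A * (y0 - x0)))
      by (apply Rmult_le_compat_l; [nra | exact HJ0]).
    assert (I1 : l1 * f1 * (s * (J1 g1 u y0 t0 - J1 g1 u x0 t0)) <= l1 * f1 * (- g1 * A * (y0 - x0)))
      by (apply Rmult_le_compat_l; [nra | exact HJ1]).
    assert (I2 : 0 <= (f0 - f1) * A * (y0 - x0) * (2 - x0 - y0)).
    { apply Rmult_le_pos; [|lra]. apply Rmult_le_pos; [|lra]. apply Rmult_le_pos; lra. }
    unfold cc. nra. }
  set (eta := E / (a + eps + 3)).
  assert (Heta : 0 < eta) by (unfold eta; apply Rdiv_lt_0_compat; lra).
  assert (Heta2 : (2 + a + eps) * eta < E).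
  { unfold eta. apply (Rmult_lt_reg_r (a + eps + 3)); [lra|].
    unfold Rdiv. rewrite Rmult_assoc, (Rmult_assoc E), Rinv_l by lra. nra. }
  destruct (EDt _ _ _ _ _ _ _ _ _ Hsol y0 t0 ltac:(split; lra) eta Heta) as [dy [Hdy Qy]].
  destruct (EDt _ _ _ _ _ _ _ _ _ Hsol x0 t0 ltac:(split; lra) eta Heta) as [dx [Hdx Qx]].
  destruct (exp_quot cc t0 eta Heta) as [d1 [Hd1 Q1]].
  destruct (derivable_pt_lim_exp t0 eta Heta) as [d2 Q2].
  pose proof (cond_pos d2) as Hd2.
  set (m := Rmin (Rmin dy dx) (Rmin (Rmin d1 d2) t0)).
  assert (Hm : 0 < m) by (unfold m; repeat apply Rmin_pos; lra).
  assert (m <= dy /\ m <= dx /\ m <= d1 /\ m <= d2 /\ m <= t0).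
  { unfold m. pose proof (Rmin_l (Rmin dy dx) (Rmin (Rmin d1 d2) t0)).
    pose proof (Rmin_r (Rmin dy dx) (Rmin (Rmin d1 d2) t0)).
    pose proof (Rmin_l dy dx). pose proof (Rmin_r dy dx).
    pose proof (Rmin_l (Rmin d1 d2) t0). pose proof (Rmin_r (Rmin d1 d2) t0).
    pose proof (Rmin_l d1 d2). pose proof (Rmin_r d1 d2). lra. }
  set (h := - (m / 2)).
  assert (Hh : h < 0) by (unfold h; lra).
  assert (Hh0 : h <> 0) by lra.
  assert (Hah : Rabs h = m / 2) by (rewrite Rabs_left; unfold h; lra).
  specialize (Qy h Hh0 ltac:(unfold h; lra) ltac:(lra)).
  specialize (Qx h Hh0 ltac:(unfold h; lra) ltac:(lra)).
  specialize (Q1 h Hh0 ltac:(lra)).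
  specialize (Q2 h Hh0 ltac:(lra)).
  assert (Hneg : Phi u cc s a eps x0 y0 (t0 + h) < 0).
  { apply F0. unfold Reg, h; lra. lra. }
  set (qy := (u y0 (t0 + h) - u y0 t0) / h) in *.
  set (qx := (u x0 (t0 + h) - u x0 t0) / h) in *.
  set (q1 := (exp (cc * (t0 + h)) - exp (cc * t0)) / h) in *.
  set (q2 := (exp (t0 + h) - exp t0) / h) in *.
  assert (Hdec : Phi u cc s a eps x0 y0 (t0 + h) - Phi u cc s a eps x0 y0 t0 =
                 h * (s * (qy - qx) - a * (y0 - x0) * q1 - eps * q2)).
  { unfold Phi, qy, qx, q1, q2. field. exact Hh0. }
  assert (HZ : 0 < s * (qy - qx) - a * (y0 - x0) * q1 - eps * q2) by nra.
  assert (Sy : Rabs (s * qy - s * ut y0 t0) < eta) by (rewrite <- Rmult_minus_distr_l, Rabs_mult, Has, Rmult_1_l; exact Qy).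
  assert (Sx : Rabs (s * qx - s * ut x0 t0) < eta) by (rewrite <- Rmult_minus_distr_l, Rabs_mult, Has, Rmult_1_l; exact Qx).
  apply Rabs_def2 in Sy. apply Rabs_def2 in Sx. apply Rabs_def2 in Q1. apply Rabs_def2 in Q2.
  assert (B1 : - (a * (y0 - x0) * q1) <= - (a * (y0 - x0) * (cc * exp (cc * t0))) + a * eta).
  { assert (0 <= a * (y0 - x0) <= a) by nra. nra. }
  assert (B2 : - (eps * q2) <= - E + eps * eta) by (unfold E; nra).
  assert (Eq3 : a * (y0 - x0) * (cc * exp (cc * t0)) = cc * A * (y0 - x0)) by (unfold A; ring).
  nra.
Qed.

Lemma diff_bound s a : (s = 1 \/ s = -1) -> 0 <= a -> s <= a ->
  forall x y t, 0 <= x -> x <= y -> y <= 1 -> 0 <= t ->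
  s * (u y t - u x t) <= a * exp (cc * t) * (y - x).
Proof.
  intros Hs Ha Hsa x y t h1 h2 h3 h4.
  apply Rnot_lt_le. intro Hc.
  set (del := s * (u y t - u x t) - a * exp (cc * t) * (y - x)).
  assert (Hdel : 0 < del) by (unfold del; lra).
  pose proof (exp_pos t) as Het.
  set (eps := del / (2 * exp t)).
  assert (Heps : 0 < eps) by (unfold eps; apply Rdiv_lt_0_compat; lra).
  assert (Hee : eps * exp t = del / 2) by (unfold eps; field; lra).
  pose proof (maxp s a eps t Hs Ha Hsa Heps x y t ltac:(unfold Reg; lra)) as Hm.
  unfold Phi in Hm. rewrite Hee in Hm. unfold del in Hm. lra.
Qed.

Lemma ux_bound t x : 0 < t -> 0 <= x <= 1 -> 0 <= ux x t <= exp (cc * t).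
Proof.
  intros Ht Hx.
  set (B := exp (cc * t)).
  assert (HQ : forall h, h <> 0 -> 0 <= x + h <= 1 -> 0 <= (u (x + h) t - u x t) / h <= B).
  { intros h Hh Hxh.
    destruct (Rlt_or_le 0 h) as [Hp|Hn].
    - pose proof (diff_bound 1 1 ltac:(lra) ltac:(lra) ltac:(lra) x (x + h) t ltac:(lra) ltac:(lra) ltac:(lra) ltac:(lra)) as U.
      pose proof (diff_bound (-1) 0 ltac:(lra) ltac:(lra) ltac:(lra) x (x + h) t ltac:(lra) ltac:(lra) ltac:(lra) ltac:(lra)) as L.
      fold B in U. replace (x + h - x) with h in U, L by ring.
      split.
      + apply Rdiv_le_0_compat; lra.
      + apply (Rmult_le_reg_r h); [lra|]. unfold Rdiv. rewrite Rmult_assoc, Rinv_l by lra. lra.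
    - assert (Hl : h < 0) by lra.
      pose proof (diff_bound 1 1 ltac:(lra) ltac:(lra) ltac:(lra) (x + h) x t ltac:(lra) ltac:(lra) ltac:(lra) ltac:(lra)) as U.
      pose proof (diff_bound (-1) 0 ltac:(lra) ltac:(lra) ltac:(lra) (x + h) x t ltac:(lra) ltac:(lra) ltac:(lra) ltac:(lra)) as L.
      fold B in U. replace (x - (x + h)) with (- h) in U, L by ring.
      replace ((u (x + h) t - u x t) / h) with ((u x t - u (x + h) t) / (- h)) by (field; lra).
      split.
      + apply Rdiv_le_0_compat; lra.
      + apply (Rmult_le_reg_r (-h)); [lra|]. unfold Rdiv. rewrite Rmult_assoc, Rinv_l by lra. lra. }
  assert (Hpick : forall d, 0 < d -> exists h, h <> 0 /\ 0 <= x + h <= 1 /\ Rabs h < d).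
  { intros d Hd. destruct (Rlt_or_le x 1) as [H1|H1].
    - exists (Rmin d (1 - x) / 2). assert (0 < Rmin d (1 - x)) by (apply Rmin_pos; lra).
      pose proof (Rmin_l d (1 - x)). pose proof (Rmin_r d (1 - x)).
      split; [lra|]. split; [lra|]. rewrite Rabs_right; lra.
    - exists (- (Rmin d 1 / 2)). assert (0 < Rmin d 1) by (apply Rmin_pos; lra).
      pose proof (Rmin_l d 1). pose proof (Rmin_r d 1).
      split; [lra|]. split; [lra|]. rewrite Rabs_left; lra. }
  assert (Dx : dom x t) by (split; lra).
  split.
  - apply Rnot_lt_le. intro Hc.
    destruct (EDx _ _ _ _ _ _ _ _ _ Hsol x t Dx (- ux x t)) as [d [Hd Hq]]; [lra|].
    destruct (Hpick d Hd) as [h [h1 [h2 h3]]].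
    specialize (Hq h h1 h2 h3). apply Rabs_def2 in Hq. pose proof (HQ h h1 h2). lra.
  - apply Rnot_lt_le. intro Hc.
    destruct (EDx _ _ _ _ _ _ _ _ _ Hsol x t Dx (ux x t - B)) as [d [Hd Hq]]; [lra|].
    destruct (Hpick d Hd) as [h [h1 [h2 h3]]].
    specialize (Hq h h1 h2 h3). apply Rabs_def2 in Hq. pose proof (HQ h h1 h2). lra.
Qed.
End M2.

Theorem lemma4p2 (f0 f1 l0 l1 g0 g1 : R) (u ux ut : R -> R -> R) :
  0 < f0 -> 0 <= f1 -> 0 < f0 - f1 ->
  0 <= l0 -> 0 <= l1 ->
  0 < g0 <= 1 -> 0 < g1 <= 1 ->
  is_solution f0 f1 l0 l1 g0 g1 u ux ut ->
  forall t x, 0 < t -> 0 <= x <= 1 ->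
    0 <= ux x t <=
    exp (((f0 - f1) - (l0 * g0) * f0 - (l1 * g1) * f1) * t).
Proof.
  intros H1 H2 H3 H4 H5 H6 H7 Hs t x Ht Hx.
  apply (ux_bound f0 f1 l0 l1 g0 g1 u ux ut); assumption.
Qed.
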